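(* Let $p$ be a state with $p\neq g$ (equivalently, the slopes $p_i/g_i$ of $\beta(p)$ are not all equal). Then the Gibbs state $g$ lies in the interior of $p^{TP}=\{Tp:T\in TP(d)\}$, taken relative to the affine hyperplane $\{x\in\mathbb{R}^d:\sum_i x_i=1\}$.
   Context: Fix $d\ge 2$, $\beta\in(0,\infty)$ and pairwise distinct reals $E_0=0,E_1,\dots,E_{d-1}$. Put $q_{m,n}=e^{-\beta(E_m-E_n)}$, $Z=\sum_j q_{j,0}$, and the Gibbs vector $g_i=q_{i,0}/Z$. A state is a probability vector in $\mathbb{R}^d$. $TP(d)$ is the set of $d\times d$ real matrices with non-negative entries, columns summing to $1$, and $Tg=g$. The thermomajorization curve $\beta(p)$ of a state $p$ is the concave piecewise-linear curve from $(0,0)$ to $(1,1)$ whose segments have horizontal lengths $g_i$ and slopes $p_i/g_i$, arranged in non-increasing order of slope. *)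

(* Defs.v *)
From HB Require Import structures.
From mathcomp Require Import all_boot all_order all_algebra.
From mathcomp Require Import all_classical all_reals all_analysis.
Set Implicit Arguments. Unset Strict Implicit. Unset Printing Implicit Defensive.
Import Order.TTheory GRing.Theory Num.Theory.
Local Open Scope ring_scope.

Definition qfac (R : realType) (d : nat) (beta : R) (E : 'I_d -> R)
  (m k : 'I_d) : R := expR (- beta * (E m - E k)).

Definition gibbs (R : realType) (n : nat) (beta : R) (E : 'I_n.+2 -> R)
  (i : 'I_n.+2) : R :=
  qfac beta E i ord0 / \sum_(j < n.+2) qfac beta E j ord0.

Definition is_state (R : realType) (d : nat) (p : 'I_d -> R) : Prop :=
  (forall i, 0 <= p i) /\ \sum_(i < d) p i = 1.

Definition mxapp (R : realType) (d : nat) (T : 'M[R]_d) (x : 'I_d -> R)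
  : 'I_d -> R := fun i => \sum_(j < d) T i j * x j.

Definition TP (R : realType) (n : nat) (beta : R) (E : 'I_n.+2 -> R)
  (T : 'M[R]_n.+2) : Prop :=
  (forall i j, 0 <= T i j) /\
  (forall j, \sum_(i < n.+2) T i j = 1) /\
  mxapp T (gibbs beta E) = gibbs beta E.

Definition TP_orbit (R : realType) (n : nat) (beta : R) (E : 'I_n.+2 -> R)
  (p : 'I_n.+2 -> R) : set ('I_n.+2 -> R) :=
  [set x | exists T, TP beta E T /\ x = mxapp T p].

(* y lies in the interior of S relative to the hyperplane {sum x_i = 1}
   (max-norm balls; all norms on R^d are equivalent) *)
Definition rel_interior_simplex_plane (R : realType) (d : nat)
  (S : set ('I_d -> R)) (y : 'I_d -> R) : Prop :=
  exists eps : R, 0 < eps /\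
    forall x : 'I_d -> R, \sum_(i < d) x i = 1 ->
      (forall i, `|x i - y i| < eps) -> S x.

(* Main.v *)
Require Import Defs.
From HB Require Import structures.
From mathcomp Require Import all_boot all_order all_algebra.
From mathcomp Require Import all_classical all_reals all_analysis.
From mathcomp Require Import ring lra.
Import Order.TTheory GRing.Theory Num.Theory.
Local Open Scope ring_scope.

Lemma gibbs_pos (R : realType) (n : nat) (beta : R) (E : 'I_n.+2 -> R) i :
  0 < gibbs beta E i.
Proof.
rewrite /gibbs divr_gt0 ?expR_gt0 //.
rewrite (bigD1 ord0) //= ltr_pwDl ?expR_gt0 // sumr_ge0 // => j _.
exact/ltW/expR_gt0.
Qed.

Lemma gibbs_sum (R : realType) (n : nat) (beta : R) (E : 'I_n.+2 -> R) :
  \sum_i gibbs beta E i = 1.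
Proof.
rewrite /gibbs -mulr_suml divff // gt_eqF // (bigD1 ord0) //= ltr_pwDl ?expR_gt0 //.
by rewrite sumr_ge0 // => j _; exact/ltW/expR_gt0.
Qed.

Lemma sum_le_term (R : realType) (n : nat) (F : 'I_n -> R) i :
  (forall j, 0 <= F j) -> F i <= \sum_j F j.
Proof.
move=> H; rewrite (bigD1 i) //= lerDl sumr_ge0 // => j _; exact: H.
Qed.

Lemma prod_le_term (R : realType) (n : nat) (F : 'I_n -> R) i :
  (forall j, 0 <= F j <= 1) -> \prod_j F j <= F i.
Proof.
move=> H; rewrite (bigD1 i) //=.
have /andP[h0 h1] := H i.
rewrite -[leRHS]mulr1 ler_wpM2l // prodr_ile1 // => j _; exact: H.
Qed.

Theorem mainTheorem6 (R : realType) (n : nat) (beta : R) (E : 'I_n.+2 -> R)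
  (p : 'I_n.+2 -> R) :
  0 < beta -> E ord0 = 0 -> injective E ->
  is_state p -> p <> gibbs beta E ->
  rel_interior_simplex_plane (TP_orbit beta E p) (gibbs beta E).
Proof.
move=> _ _ _ [p0 p1] pg.
set g := gibbs beta E.
have gpos : forall i, 0 < g i by move=> i; apply: gibbs_pos.
have gsum : \sum_i g i = 1 by apply: gibbs_sum.
have gle1 : forall i, g i <= 1.
  by move=> i; rewrite -gsum; apply: sum_le_term => j; exact/ltW.
pose c := \sum_j (p j - g j) ^+ 2 / g j.
have cpos : 0 < c.
  have [i pgi] : exists i, p i != g i.
    apply/existsP; apply: contraT; rewrite negb_exists => /forallP H.
    by exfalso; apply: pg; apply: funext => i; apply/eqP; move: (H i); rewrite negbK.
  rewrite /c (bigD1 i) //= ltr_pwDl //.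
    by rewrite divr_gt0 // lt_def sqr_ge0 andbT sqrf_eq0 subr_eq0.
  by rewrite sumr_ge0 // => j _; rewrite divr_ge0 ?sqr_ge0 // ltW.
pose v j := (p j - g j) / g j / c.
have vg : \sum_j v j * g j = 0.
  transitivity (\sum_j (p j - g j) / c).
    apply: eq_bigr => j _; rewrite /v; field.
    by rewrite (gt_eqF cpos) (gt_eqF (gpos j)).
  by rewrite -mulr_suml sumrB p1 gsum subrr mul0r.
have vp : \sum_j v j * p j = 1.
  have -> : \sum_j v j * p j = \sum_j v j * (p j - g j) + \sum_j v j * g j.
    by rewrite -big_split /=; apply: eq_bigr => j _; rewrite -mulrDr subrK.
  rewrite vg addr0.
  transitivity ((\sum_j (p j - g j) ^+ 2 / g j) / c); last by rewrite divff // gt_eqF.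
  rewrite mulr_suml; apply: eq_bigr => j _.
  rewrite /v expr2; field.
  by rewrite (gt_eqF cpos) (gt_eqF (gpos j)).
pose M := 1 + \sum_j `|v j|.
have Mpos : 0 < M by rewrite ltr_pwDl // sumr_ge0.
have vM : forall j, `|v j| <= M.
  move=> j; have h := (@sum_le_term _ _ (fun k => `|v k|) j (fun k => normr_ge0 _)).
  rewrite /M; apply: (le_trans h) => /=; lra.
pose m := \prod_j g j.
have mpos : 0 < m by rewrite prodr_gt0.
have mg : forall i, m <= g i.
  by move=> i; apply: prod_le_term => j; rewrite ltW //= gle1.
exists (m / M); split; first by rewrite divr_gt0.
move=> x xs xe.
pose u i := x i - g i.
have usum : \sum_i u i = 0 by rewrite sumrB xs gsum subrr.
exists (\matrix_(i, j) (g i + u i * v j)).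
split; last first.
  apply: funext => i; rewrite /mxapp.
  under eq_bigr do rewrite mxE mulrDl -mulrA.
  by rewrite big_split /= -mulr_sumr p1 mulr1 -mulr_sumr vp mulr1 /u addrC subrK.
split.
  move=> i j; rewrite mxE.
  have h : `|u i * v j| <= g i.
    rewrite normrM; apply: le_trans (mg i).
    have -> : m = m / M * M by rewrite divfK // gt_eqF.
    by rewrite ler_pM // ltW // xe.
  have h2 := ler_norm (- (u i * v j)); rewrite normrN in h2.
  have : 0 <= g i - - (u i * v j) by rewrite subr_ge0; exact: le_trans h2 h.
  by rewrite opprK; apply.
split.
  move=> j; under eq_bigr do rewrite mxE.
  by rewrite big_split /= gsum -mulr_suml usum mul0r addr0.
apply: funext => i; rewrite /mxapp.
under eq_bigr do rewrite mxE mulrDl -mulrA.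
by rewrite big_split /= -mulr_sumr gsum mulr1 -mulr_sumr vg mulr0 addr0.
Qed.
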